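(* Let $F\in\mathbb{R}^{n\times n}$, $G\in\mathbb{R}^{n\times m}$, $K\in\mathbb{R}^{m\times n}$, $L\in\mathbb{R}^{n\times p}$ with $\rho[F]<1$ and $\rho[F+GK]<1$, let $\Sigma\in\mathbb{R}^{p\times p}$ be symmetric positive definite and $\alpha>0$. Consider $e_{k+1}^\delta=Fe_k^\delta-L\Sigma^{1/2}\bar\delta_k$ and $x_{k+1}^\delta=(F+GK)x_k^\delta-GKe_k^\delta$ for $k\ge k^*$, with $e_{k^*}^\delta=x_{k^*}^\delta=\mathbf{0}$ and inputs satisfying $\bar\delta_k^T\bar\delta_k\leq\alpha$ for all $k$. Then every value $x_k^\delta$, $k\ge k^*$, attainable under such inputs lies in $$\mathcal{E}_x^\delta=\bigoplus_{k=1}^{\infty}\mathcal{E}\big(\alpha\,H_kL\Sigma L^TH_k^T\big),\qquad H_k=(F+GK)^k-F^k.$$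
   Context: $\Sigma^{1/2}$ is the symmetric positive definite square root of $\Sigma$; $\rho[\cdot]$ is the spectral radius. For a symmetric positive semidefinite matrix $\mathcal{Q}$, $\mathcal{E}(\mathcal{Q})=\{\mathcal{Q}^{1/2}u:\ u^Tu\le 1\}$ (for positive definite $\mathcal{Q}$ this equals $\{\mu:\mu^T\mathcal{Q}^{-1}\mu\le1\}$). $\oplus$ denotes the Minkowski sum, and the infinite sum $\bigoplus_k\mathcal{E}_k$ is the set of all convergent sums $\sum_k y_k$ with $y_k\in\mathcal{E}_k$. *)

(* Defs.v *)
From HB Require Import structures.
From mathcomp Require Import all_boot all_order all_algebra.
From mathcomp Require Import complex.
From mathcomp Require Import all_classical all_reals all_analysis.
Set Implicit Arguments. Unset Strict Implicit. Unset Printing Implicit Defensive.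
Import Order.TTheory GRing.Theory Num.Theory.
Import numFieldNormedType.Exports.
Local Open Scope ring_scope.
Local Open Scope classical_set_scope.

Section Defs.
Variable R : realType.

Definition eigenvalues (n : nat) (A : 'M[R]_n) : set R[i] :=
  [set z | root (char_poly (map_mx (fun a : R => (a%:C)%C) A)) z].

Definition spectral_radius (n : nat) (A : 'M[R]_n) : R :=
  sup [set r : R | exists2 z, eigenvalues A z & (r%:C)%C = `|z|].

Definition symmetric (n : nat) (A : 'M[R]_n) : Prop := A^T = A.
Definition psd (n : nat) (A : 'M[R]_n) : Prop :=
  symmetric A /\ forall v : 'cV[R]_n, 0 <= (v^T *m A *m v) 0 0.
Definition pd (n : nat) (A : 'M[R]_n) : Prop :=
  symmetric A /\ forall v : 'cV[R]_n, v != 0 -> 0 < (v^T *m A *m v) 0 0.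

Definition is_psd_sqrt (n : nat) (A S : 'M[R]_n) : Prop := psd S /\ S *m S = A.
Definition is_pd_sqrt (n : nat) (A S : 'M[R]_n) : Prop := pd S /\ S *m S = A.

Definition ellipsoid (n : nat) (Q : 'M[R]_n) : set 'cV[R]_n :=
  [set x | exists S, is_psd_sqrt Q S /\
           exists2 u : 'cV[R]_n, (u^T *m u) 0 0 <= 1 & x = S *m u].

(* infinite Minkowski sum (+)_{k>=1} E_k : all convergent sums sum_{k>=1} y_k,
   y_k in E_k.  Here the family is indexed from 0, i.e. E' j = E_{j+1}. *)
Definition minkowski_series (n : nat) (E : nat -> set 'cV[R]_n) : set 'cV[R]_n :=
  [set s : 'cV[R]_n | exists y : nat -> 'cV[R]_n,
     (forall j, E j (y j)) /\ series y @ \oo --> s].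

End Defs.

(* Main.v *)
Require Import Defs.
From HB Require Import structures.
From mathcomp Require Import all_boot all_order all_algebra.
From mathcomp Require Import complex.
From mathcomp Require Import all_classical all_reals all_analysis.
Import Order.TTheory GRing.Theory Num.Theory.
Local Open Scope ring_scope.
Set Implicit Arguments. Unset Strict Implicit.

Lemma interp_poly (R : fieldType) (f : R -> R) (s : seq R) :
  exists p : {poly R}, forall a, a \in s -> p.[a] = f a.
Proof.
elim: s => [|b s [p Hp]]; first by exists 0.
have [bs|bs] := boolP (b \in s).
  by exists p => a; rewrite inE => /orP[/eqP->|/Hp]; [apply: Hp|].
pose P := \prod_(c <- s) ('X - c%:P).
have P0 : P.[b] != 0.
  rewrite horner_prod prodf_seq_neq0; apply/allP => c cs /=.
  by rewrite hornerXsubC subr_eq0; apply: contra bs => /eqP ->.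
have Pc c : c \in s -> P.[c] = 0.
  by move=> cs; apply/eqP; rewrite -/(root P c) root_prod_XsubC cs.
exists (p + ((f b - p.[b]) / P.[b]) *: P) => a; rewrite inE hornerD hornerZ.
case/orP=> [/eqP->|aS]; first by rewrite mulfVK // addrC subrK.
rewrite (Pc a aS). by rewrite Hp //; set z := (_ / _); rewrite -[z * 0]/(GRing.mul z 0) GRing.mulr0 GRing.addr0.
Qed.

Section Spec.
Variables (R : realType) (n' p : nat) (M : 'M[R]_(n'.+1, p)).
Let C := R[i].
Let toC := real_complex R.
Let Q := M *m M^T.
Let QC : 'M[C]_n'.+1 := map_mx toC Q.
Let MC : 'M[C]_(n'.+1, p) := map_mx toC M.

Lemma QC_real : QC \is a realmx.
Proof. by apply/mxOverP => i j; rewrite mxE; apply/complex_realP; eexists. Qed.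

Lemma QC_sym : QC \is symmetricmx.
Proof.
apply/is_hermitianmxP; rewrite expr0 scale1r; apply/matrixP => i j.
rewrite !mxE /=; congr (toC _); apply: eq_bigr => k _; by rewrite !mxE mulrC.
Qed.

Lemma QC_herm : QC \is hermsymmx.
Proof. exact: realsym_hermsym QC_sym QC_real. Qed.

Let P := spectralmx QC.
Let sp := spectral_diag QC.

Lemma QC_eq : QC = invmx P *m diag_mx sp *m P.
Proof. exact/orthomx_spectralP/symmetric_normalmx/QC_real/QC_sym. Qed.

Definition lam (i : 'I_n'.+1) : R := complex.Re (sp 0 i).

Lemma sp_lam i : sp 0 i = (lam i)%:C%C.
Proof.
rewrite /lam RRe_real //.
by have /mxOverP := hermitian_spectral_diag_real QC_herm; apply.
Qed.

Lemma spec_eq (r1 r2 : {poly R}) :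
  (forall i, r1.[lam i] = r2.[lam i]) -> horner_mx Q r1 = horner_mx Q r2.
Proof.
move=> Hr; apply: (@map_mx_inj _ _ toC).
rewrite !map_horner_mx -/QC QC_eq !horner_mx_uconjC ?spectral_unit //.
rewrite !horner_mx_diag; congr (_ *m diag_mx _ *m _).
apply/matrixP => i j; rewrite !mxE (ord1 i) sp_lam !horner_map /=.
by rewrite Hr.
Qed.

Lemma lam_ge0 i : 0 <= lam i.
Proof.
have D : diag_mx sp = P *m QC *m invmx P.
  by rewrite QC_eq !mulmxA mulmxV ?spectral_unit // mul1mx -mulmxA mulmxV ?spectral_unit // mulmx1.
have QCM : QC = MC *m map_mx Num.conj MC^T.
  rewrite /QC /Q map_mxM; congr (_ *m _).
  apply/matrixP => a b; rewrite !mxE.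
  by apply/esym/CrealP/complex_realP; eexists.
suff : (0 <= (lam i)%:C)%C by rewrite ler0c.
rewrite -sp_lam.
have -> : sp 0 i = diag_mx sp i i by rewrite mxE eqxx mulr1n.
rewrite D invmx_unitary ?spectral_unitarymx // QCM.
rewrite -!mulmxA mulmxA -[map_mx Num.conj MC^T *m _]map_mxM.
rewrite -[MC^T *m _]trmx_mul.
rewrite mxE; apply: sumr_ge0 => k _.
rewrite !mxE; exact: mul_conjC_ge0.
Qed.

End Spec.

Lemma horner_mx_tr (R : comNzRingType) n' (A : 'M[R]_n'.+1) (r : {poly R}) :
  A^T = A -> (horner_mx A r)^T = horner_mx A r.
Proof.
move=> HA; elim/poly_ind: r => [|r c IH].
  by rewrite rmorph0 trmx0.
rewrite rmorphD rmorphM /= horner_mx_X horner_mx_C linearD /= tr_scalar_mx.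
rewrite -!mulmxE trmx_mul IH HA; congr (_ + _).
by have := comm_mx_horner r (erefl (A *m A)).
Qed.

Lemma quad_ge0 (R : realDomainType) k (v : 'cV[R]_k) : 0 <= (v^T *m v) 0 0.
Proof. rewrite mxE; apply: sumr_ge0 => i _; rewrite mxE; by rewrite -expr2 sqr_ge0. Qed.

Lemma mmT_eq0 (R : realDomainType) k l (Z : 'M[R]_(k, l)) : Z *m Z^T = 0 -> Z = 0.
Proof.
move=> H; apply/matrixP => i j; rewrite mxE.
have /matrixP/(_ i i) := H; rewrite !mxE => /eqP.
rewrite psumr_eq0 => [/allP/(_ j (mem_index_enum _))|k0 _]; rewrite mxE.
  by rewrite /= mulf_eq0 orbb => /eqP.
by rewrite -expr2 sqr_ge0.
Qed.

Section Key.
Variables (R : realType) (n' p : nat) (M : 'M[R]_(n'.+1, p)).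
Let Q := M *m M^T.
Let hQ := horner_mx Q.

Lemma Q_sym : Q^T = Q.
Proof. by rewrite /Q trmx_mul trmxK. Qed.

Lemma key (d : 'cV[R]_p) : (d^T *m d) 0 0 <= 1 ->
  exists S : 'M[R]_n'.+1, (S^T = S /\ (forall v : 'cV[R]_n'.+1, 0 <= (v^T *m S *m v) 0 0))
    /\ S *m S = Q /\
    exists2 u : 'cV[R]_n'.+1, (u^T *m u) 0 0 <= 1 & M *m d = S *m u.
Proof.
move=> hd.
pose s := [seq lam M i | i <- enum 'I_n'.+1].
have ins i : lam M i \in s by apply: map_f; rewrite mem_enum.
have [g Hg] := interp_poly (fun a => Num.sqrt (Num.sqrt a)) s.
have [q Hq] := interp_poly (fun a => (Num.sqrt a)^-1) s.
have Hg' i : g.[lam M i] = Num.sqrt (Num.sqrt (lam M i)) by apply: Hg.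
have Hq' i : q.[lam M i] = (Num.sqrt (lam M i))^-1 by apply: Hq.
have g2 i : g.[lam M i] ^+ 2 = Num.sqrt (lam M i) by rewrite Hg' sqr_sqrtr // sqrtr_ge0.
have symh r : (hQ r)^T = hQ r by apply: horner_mx_tr; exact: Q_sym.
pose G := hQ g; pose T := hQ q.
have hX : hQ 'X = Q by rewrite /hQ horner_mx_X.
have hX' : M *m M^T = hQ 'X by rewrite hX.
have mE (A B : 'M[R]_n'.+1) : A *m B = A * B by rewrite mulmxE.
exists (G *m G); split; [split|split].
- by rewrite trmx_mul symh.
- move=> v; have -> : v^T *m (G *m G) *m v = (G *m v)^T *m (G *m v).
    by rewrite trmx_mul symh !mulmxA.
  exact: quad_ge0.
- rewrite -hX /G !mulmxA.
  rewrite !mE -!rmorphM; apply: spec_eq => i.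
  rewrite hornerX !hornerM -mulrA -!expr2 g2 sqr_sqrtr //; exact: lam_ge0.
pose E := hQ (g * g * q).
have EM : E *m M = M.
  apply/eqP; rewrite -subr_eq0; apply/eqP.
  have -> : E *m M - M = (E - 1) *m M by rewrite mulmxBl mul1mx.
  apply: mmT_eq0; rewrite trmx_mul.
  rewrite linearB /= trmx1 symh -mulmxA [M *m (M^T *m _)]mulmxA.
  rewrite hX' -[1%:M]/(1 : 'M[R]_n'.+1) !mE.
  rewrite /E -(rmorph1 hQ) -!rmorphB -!rmorphM.
  rewrite -(rmorph0 hQ); apply: spec_eq => i.
  rewrite !(hornerE, hornerM) /= -expr2 g2 Hq'.
  have [->|l0] := eqVneq (lam M i) 0; first by rewrite !mulr0 mul0r.
  by rewrite mulfV ?subrr ?mul0r // sqrtr_eq0 -ltNge lt_def l0 lam_ge0.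
pose E1 := T *m M.
have E1E : E1 *m E1^T *m E1 = E1.
  rewrite /E1 trmx_mul symh -!mulmxA [M *m (M^T *m _)]mulmxA hX'.
  rewrite !mulmxA !mE /T -!rmorphM.
  congr (_ *m M); apply: spec_eq => i.
  rewrite !hornerM hornerX Hq'.
  have [->|l0] := eqVneq (lam M i) 0; first by rewrite sqrtr0 invr0 !mul0r.
  have s0 : Num.sqrt (lam M i) != 0.
    by rewrite sqrtr_eq0 -ltNge lt_def l0 lam_ge0.
  rewrite -{2}(sqr_sqrtr (lam_ge0 M i)) expr2.
  by rewrite !mulrA (mulVf s0) mul1r (mulfV s0) div1r.
exists (E1 *m d).
  pose Pm := E1^T *m E1.
  have PmT : Pm^T = Pm by rewrite /Pm trmx_mul trmxK.
  have PmP : Pm *m Pm = Pm by rewrite /Pm -mulmxA [E1 *m (E1^T *m E1)]mulmxA E1E.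
  have : 0 <= (((1%:M - Pm) *m d)^T *m ((1%:M - Pm) *m d)) 0 0 by apply: quad_ge0.
  have -> : ((1%:M - Pm) *m d)^T *m ((1%:M - Pm) *m d) = d^T *m d - (E1 *m d)^T *m (E1 *m d).
    have IT : (1%:M - Pm)^T = 1%:M - Pm by rewrite linearB /= trmx1 PmT.
    rewrite trmx_mul IT -mulmxA (mulmxA (1%:M - Pm)).
    have -> : (1%:M - Pm) *m (1%:M - Pm) = 1%:M - Pm.
      by rewrite mulmxBr mulmx1 mulmxBl mul1mx PmP subrr subr0.
    by rewrite mulmxBl mul1mx mulmxBr trmx_mul /Pm !mulmxA.
  have hB (A B : 'M[R]_1) : (A - B) 0 0 = A 0 0 - B 0 0 by rewrite !mxE.
  rewrite hB subr_ge0 => h; exact: le_trans h hd.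
by rewrite /E1 !mulmxA /G /T !mE -!rmorphM -/E EM.
Qed.
End Key.

Unset Implicit Arguments.
Import numFieldNormedType.Exports.
Local Open Scope classical_set_scope.

Lemma key_ell (R : realType) n p (M : 'M[R]_(n, p)) (d : 'cV[R]_p) :
  (d^T *m d) 0 0 <= 1 -> ellipsoid (M *m M^T) (M *m d).
Proof.
case: n M => [|n'] M hd.
  exists 0; split; last by exists 0; [rewrite mulmx0 mxE; exact: ler01 | rewrite !flatmx0].
  split; last by rewrite !flatmx0.
  split; first by rewrite /Defs.symmetric trmx0.
  by move=> v; rewrite mulmx0 mul0mx mxE.
have [S [[ST Spos] [SS [u hu hM]]]] := key M hd.
exists S; split; first by split.
by exists u.
Qed.

Theorem theorem3 (R : realType) (n m p : nat)
  (F : 'M[R]_n) (G : 'M[R]_(n, m)) (K : 'M[R]_(m, n)) (L : 'M[R]_(n, p))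
  (Sigma Sigma_half : 'M[R]_p) (alpha : R) (kstar : nat)
  (dbar : nat -> 'cV[R]_p) (e x : nat -> 'cV[R]_n) :
  spectral_radius F < 1 ->
  spectral_radius (F + G *m K) < 1 ->
  pd Sigma ->
  is_pd_sqrt Sigma Sigma_half ->
  0 < alpha ->
  (forall k, ((dbar k)^T *m dbar k) 0 0 <= alpha) ->
  e kstar = 0 -> x kstar = 0 ->
  (forall k, (kstar <= k)%N ->
     e k.+1 = F *m e k - L *m Sigma_half *m dbar k) ->
  (forall k, (kstar <= k)%N ->
     x k.+1 = (F + G *m K) *m x k - G *m K *m e k) ->
  let H := fun k : nat => (F + G *m K) ^+ k - F ^+ k in
  forall k, (kstar <= k)%N ->
    minkowski_series
      (fun j => ellipsoid (alpha *: (H j.+1 *m L *m Sigma *m L^T *m (H j.+1)^T)))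
      (x k).
Proof.
move=> _ _ _ [[ShT _] Sh2] ha hd he0 hx0 He Hx H k hk.
pose w j := L *m Sigma_half *m dbar j.
have eF t : e (kstar + t)%N = - \sum_(i < t) F ^+ i *m w (kstar + t - i.+1)%N.
  elim: t => [|t IH]; first by rewrite addn0 he0 big_ord0 oppr0.
  rewrite addnS He ?leq_addr // IH big_ord_recl /= mulmxN mulmx_sumr.
  rewrite expr0 mul1mx subSS subn0 opprD addrC; congr (- _ + _); congr (- _).
  apply: eq_bigr => i _; rewrite /bump /= add1n subSS.
  by rewrite mulmxA exprS mulmxE.
have H0 : H 0%N = 0 by rewrite /H !expr0 subrr.
have HS i : (F + G *m K) *m H i + G *m K *m F ^+ i = H i.+1.
  rewrite /H !mulmxE mulrBr -exprS mulrDl exprS.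
  by rewrite opprD addrA subrK exprS.
have xF t : x (kstar + t)%N = \sum_(i < t) H i *m w (kstar + t - i.+1)%N.
  elim: t => [|t IH]; first by rewrite addn0 hx0 big_ord0.
  rewrite addnS Hx ?leq_addr // IH eF big_ord_recl /= H0 mul0mx add0r.
  rewrite mulmxN opprK !mulmx_sumr -big_split /=.
  apply: eq_bigr => i _; rewrite /bump /= add1n subSS.
  by rewrite !(mulmxA _ _ (w _)) -mulmxDl HS.
rewrite -(subnKC hk); set t := (k - kstar)%N.
pose f i := if (i < t)%N then H i *m w (kstar + t - i.+1)%N else 0.
exists (fun j => f j.+1); split.
  move=> j.
  pose c := Num.sqrt alpha.
  have c0 : c != 0 by rewrite sqrtr_eq0 -ltNge.
  pose M := c *: (H j.+1 *m L *m Sigma_half).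
  have -> : alpha *: (H j.+1 *m L *m Sigma *m L^T *m (H j.+1)^T) = M *m M^T.
    rewrite /M linearZ /= -scalemxAl -scalemxAr scalerA -expr2 sqr_sqrtr; last exact: ltW.
    congr (_ *: _); rewrite !trmx_mul ShT -Sh2 !mulmxA.
    done.
  rewrite /f; case: ifP => hj.
    pose dd := c^-1 *: dbar (kstar + t - j.+2)%N.
    have -> : H j.+1 *m w (kstar + t - j.+2)%N = M *m dd.
      by rewrite /M /dd -scalemxAl scalemxAr scalerA mulfV // scale1r /w !mulmxA.
    apply: key_ell.
    rewrite /dd [(_ *: _)^T]linearZ /= -scalemxAl -scalemxAr scalerA mxE.
    rewrite -expr2 exprVn sqr_sqrtr; last exact: ltW.
    rewrite mulrC -ler_pdivlMr ?invr_gt0 // div1r invrK.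
    exact: hd.
  have -> : (0 : 'cV[R]_n) = M *m 0 by rewrite mulmx0.
  apply: key_ell; rewrite mulmx0 mxE; exact: ler01.
apply: cvg_near_cst; exists t => // N /= hN.
rewrite seriesEord /= xF.
rewrite (big_ord_widen N.+1 (fun i => H i *m w (kstar + t - i.+1)%N) (leqW hN)).
rewrite [in RHS]big_mkcond [in RHS]big_ord_recl /=.
have -> : (if (0 < t)%N then H 0%N *m w (kstar + t - 1)%N else 0) = 0.
  by rewrite H0 mul0mx if_same.
rewrite add0r; apply: eq_bigr => i _.
by rewrite /f /bump /= add1n.
Qed.
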